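(* Let $\langle (x_n,y_n)\rangle_{n\in\mathbb{N}}$ be the solutions in $\mathbb{N}^2$ of $x^2-19\,y^2=1$, indexed so that $y_0<y_1<\cdots$. Suppose $n>0$ is not a power of $2$ and $y_n/39$ is representable. Then the equation \[ 19\cdot 3^2\cdot (r^2+r\,s+5\,s^2)^2 - 13^2\cdot (v^2+v\,u+5\,u^2)^2 = 2 \] has an integer solution $\bar r,\bar s,\bar v,\bar u$ with $\bar r\neq\pm1$ or $\bar s\neq 0$, such that $39\,(\bar r^2+\bar r\bar s+5\bar s^2)(\bar v^2+\bar v\bar u+5\bar u^2)\mid y_n$.
   Context: $(x_0,y_0)=(1,0)$, $(x_1,y_1)=(170,39)$, $x_n+y_n\sqrt{19}=(170+39\sqrt{19})^n$. A non-negative integer $N$ is called representable if $N=w^2+w\,t+5\,t^2$ for some $w,t\in\mathbb{Z}$. *)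

(* Defs.v *)
From Stdlib Require Import ZArith Arith Lia.
Open Scope Z_scope.

(* (x_n, y_n) with x_n + y_n sqrt 19 = (170 + 39 sqrt 19)^n,
   computed by the recursion
   x_{n+1} + y_{n+1} sqrt 19 = (x_n + y_n sqrt 19)(170 + 39 sqrt 19). *)
Fixpoint pell (n : nat) : Z * Z :=
  match n with
  | O => (1, 0)
  | S m => let (x, y) := pell m in (170 * x + 19 * 39 * y, 39 * x + 170 * y)
  end.

Definition xn (n : nat) : Z := fst (pell n).
Definition yn (n : nat) : Z := snd (pell n).

Definition Qf (w t : Z) : Z := w ^ 2 + w * t + 5 * t ^ 2.

Definition representable (N : Z) : Prop :=
  0 <= N /\ exists w t : Z, N = Qf w t.

Definition is_pow2 (n : nat) : Prop := exists k : nat, n = (2 ^ k)%nat.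

(* Main.v *)
Require Import Defs.
From Stdlib Require Import ZArith Lia Znumtheory.
Open Scope Z_scope.

Lemma Qf_eq w t : Qf w t = w*w + w*t + 5*t*t.
Proof. unfold Qf. ring. Qed.

Lemma Qf_nonneg w t : 0 <= Qf w t.
Proof. rewrite Qf_eq. nia. Qed.

Lemma Qf_hom h w t : Qf (h*w) (h*t) = h*h * Qf w t.
Proof. rewrite !Qf_eq. ring. Qed.

Lemma formK (n : nat) : forall a b c, (Z.to_nat a <= n)%nat -> 0 < a ->
  b*b - 4*a*c = -19 -> forall x y, exists w t, Qf w t = a*x*x + b*x*y + c*y*y.
Proof.
  induction n as [|n IH]; intros a b c Ha Hpos Hd x y.
  - lia.
  - set (k := (b + a) / (2*a)).
    assert (Hk : 2*a*k <= b + a < 2*a*k + 2*a).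
    { pose proof (Z.div_mod (b+a) (2*a) ltac:(lia)).
      pose proof (Z.mod_pos_bound (b+a) (2*a) ltac:(lia)). unfold k. lia. }
    set (b' := b - 2*a*k). set (c' := a*k*k - b*k + c).
    assert (Hd' : b'*b' - 4*a*c' = -19) by (unfold b', c'; rewrite <- Hd; ring).
    assert (Hval : a*x*x + b*x*y + c*y*y = a*(x+k*y)*(x+k*y) + b'*(x+k*y)*y + c'*y*y)
      by (unfold b', c'; ring).
    assert (Hb' : -a <= b' < a) by (unfold b'; lia). rewrite Hval. clearbody b' c'. clear Hval Hd.
    assert (Hc'pos : 0 < c') by nia.
    destruct (Z_lt_le_dec c' a) as [Hlt|Hge].
    + destruct (IH c' (-b') a ltac:(lia) Hc'pos ltac:(lia) y (-(x+k*y))) as [w [t Hw]].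
      exists w, t. rewrite Hw. ring.
    + assert (a <= 2) by nia.
      assert (a = 1 \/ a = 2) as [->| ->] by lia.
      * assert (b' = -1 \/ b' = 0) as [->| ->] by lia; [|lia].
        assert (c' = 5) as -> by lia.
        exists (x+k*y), (-y). rewrite Qf_eq. ring.
      * exfalso. assert (b' = -2 \/ b' = -1 \/ b' = 0 \/ b' = 1) as [->|[->|[->| ->]]] by lia; lia.
Qed.

Lemma proper_rep A B w t : 0 < A -> A * B = Qf w t -> Z.gcd w t = 1 ->
  exists r s, A = Qf r s.
Proof.
  intros HA HN Hg.
  apply Zgcd_1_rel_prime, rel_prime_bezout in Hg. destruct Hg as [u v Huv].
  set (b := -2*w*v + w*u - v*t + 10*t*u).
  set (c := Qf (-v) u).
  assert (Hid : b*b - 4*Qf w t*c = -19*(u*w+v*t)*(u*w+v*t))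
    by (unfold b, c; rewrite !Qf_eq; ring).
  rewrite Huv, <- HN in Hid.
  destruct (formK (Z.to_nat A) A b (B*c) ltac:(lia) HA ltac:(lia) 1 0) as [r [s H]].
  exists r, s. rewrite H. ring.
Qed.

Lemma rep_div (n : nat) : forall A B w t, (Z.to_nat A < n)%nat -> 0 < A -> 0 < B ->
  rel_prime A B -> A * B = Qf w t -> exists r s, A = Qf r s.
Proof.
  induction n as [|n IH]; intros A B w t Hn HA HB Hrp HN; [lia|].
  set (g := Z.gcd w t).
  assert (Hg0 : 0 <= g) by apply Z.gcd_nonneg.
  assert (Hgnz : g <> 0).
  { intro E. apply Z.gcd_eq_0 in E. destruct E as [-> ->].
    rewrite Qf_eq in HN. nia. }
  destruct (Z.gcd_divide_l w t) as [w' Hw]. destruct (Z.gcd_divide_r w t) as [t' Ht].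
  fold g in Hw, Ht.
  set (h := Z.gcd g A).
  assert (Hh0 : 0 <= h) by apply Z.gcd_nonneg.
  destruct (Z.eq_dec h 1) as [Hh1|Hh1].
  -
    assert (Hrel : rel_prime (g*g) A).
    { apply rel_prime_sym, rel_prime_mult; apply rel_prime_sym, Zgcd_1_rel_prime; exact Hh1. }
    assert (Hdiv : (g*g | A*B)).
    { rewrite HN, Hw, Ht, (Z.mul_comm w' g), (Z.mul_comm t' g), Qf_hom.
      exists (Qf w' t'). ring. }
    destruct (Gauss _ _ _ Hdiv Hrel) as [B' HB'].
    apply (proper_rep A B' w' t' HA).
    + apply (Z.mul_reg_l _ _ (g*g)); [nia|].
      rewrite <- Qf_hom. replace (g*w') with w by (rewrite Hw; ring).
      replace (g*t') with t by (rewrite Ht; ring). rewrite <- HN, HB'. ring.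
    + assert (E1 : w' = w / g) by (rewrite Hw, Z.div_mul; auto).
      assert (E2 : t' = t / g) by (rewrite Ht, Z.div_mul; auto).
      rewrite E1, E2. apply Z.gcd_div_gcd; auto.
  - assert (Hh : 1 < h).
    { assert (h <> 0). { intro E. apply Z.gcd_eq_0 in E. lia. } lia. }
    destruct (Z.gcd_divide_l g A) as [g1 Hg1]. destruct (Z.gcd_divide_r g A) as [A1 HA1].
    fold h in Hg1, HA1.
    assert (Hrel : rel_prime (h*h) B).
    { apply rel_prime_sym, rel_prime_mult; apply rel_prime_sym, (rel_prime_div A); auto; exists A1; auto. }
    assert (Hdiv : (h*h | B*A)).
    { exists (Qf (g1*w') (g1*t')). rewrite Z.mul_comm, HN.
      replace w with (h*(g1*w')) by (rewrite Hw, Hg1; ring).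
      replace t with (h*(g1*t')) by (rewrite Ht, Hg1; ring). rewrite Qf_hom. ring. }
    destruct (Gauss _ _ _ Hdiv Hrel) as [A' HA'].
    assert (HA'pos : 0 < A') by nia.
    destruct (IH A' B (g1*w') (g1*t')) as [r [s Hrs]].
    + assert (h*h >= 4) by nia. assert (A' < A) by (rewrite HA'; nia). lia.
    + exact HA'pos.
    + exact HB.
    + apply (rel_prime_div A); auto. exists (h*h). lia.
    + apply (Z.mul_reg_l _ _ (h*h)); [nia|].
      rewrite <- Qf_hom. replace (h*(g1*w')) with w by (rewrite Hw, Hg1; ring).
      replace (h*(g1*t')) with t by (rewrite Ht, Hg1; ring). rewrite <- HN, HA'. ring.
    + exists (h*r), (h*s). rewrite Qf_hom, <- Hrs, HA'. ring.
Qed.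

Lemma xS m : xn (S m) = 170 * xn m + 741 * yn m.
Proof. unfold xn, yn. simpl. destruct (pell m). simpl. ring. Qed.
Lemma yS m : yn (S m) = 39 * xn m + 170 * yn m.
Proof. unfold xn, yn. simpl. destruct (pell m). simpl. ring. Qed.
Lemma x0 : xn 0 = 1. Proof. reflexivity. Qed.
Lemma y0 : yn 0 = 0. Proof. reflexivity. Qed.

Lemma pell_add m k : xn (m + k) = xn m * xn k + 19 * yn m * yn k /\
                     yn (m + k) = xn m * yn k + yn m * xn k.
Proof.
  induction m as [|m [IH1 IH2]].
  - simpl plus. rewrite x0, y0. split; ring.
  - simpl plus. rewrite !xS, !yS, IH1, IH2. split; ring.
Qed.

Lemma pell_eq m : xn m * xn m - 19 * yn m * yn m = 1.
Proof.
  induction m as [|m IH]; [reflexivity|].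
  rewrite xS, yS. rewrite <- IH. ring.
Qed.

Lemma pell_pos m : 1 <= xn m /\ 0 <= yn m /\ ((0 < m)%nat -> 0 < yn m).
Proof.
  induction m as [|m IH]; [cbv; repeat split; try discriminate; lia|].
  rewrite xS, yS. lia.
Qed.

Fixpoint eta (j : nat) : Z * Z :=
  match j with
  | O => (13, 3)
  | S i => let (A, B) := eta i in (170*A + 741*B, 39*A + 170*B)
  end.

Lemma eta_props j : let (A, B) := eta j in
  A*A + 19*B*B = 2 * xn (2*j+1) /\ A*B = yn (2*j+1) /\ A*A - 19*B*B = -2 /\
  (13 | A) /\ (3 | B) /\ 13 <= A /\ 3 <= B.
Proof.
  induction j as [|j IH].
  - simpl. vm_compute. repeat split; try discriminate.
    exists 1; reflexivity. exists 1; reflexivity.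
  - cbn [eta]. destruct (eta j) as [A B].
    destruct IH as [H1 [H2 [H3 [[p Hp] [[q Hq] [H6 H7]]]]]].
    replace (2 * S j + 1)%nat with (S (S (2*j+1))) by lia.
    repeat rewrite ?xS, ?yS.
    repeat split.
    + transitivity (57799*(A*A+19*B*B) + 503880*(A*B)); [ring|]. rewrite H1, H2. ring.
    + transitivity (6630*(A*A+19*B*B) + 57799*(A*B)); [ring|]. rewrite H1, H2. ring.
    + rewrite <- H3. ring.
    + exists (170*p + 57*B). rewrite Hp. ring.
    + exists (13*A + 170*q). rewrite Hq. ring.
    + lia.
    + lia.
Qed.

Lemma pow2_dec (n : nat) : (0 < n)%nat -> exists k m, n = (2^k * m)%nat /\ Nat.Odd m.
Proof.
  induction n as [n IH] using lt_wf_ind. intros Hn.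
  destruct (Nat.Even_or_Odd n) as [[h Hh]|Ho].
  - destruct (IH h ltac:(lia) ltac:(lia)) as [k [m [E O]]].
    exists (S k), m. split; auto. rewrite Nat.pow_succ_r'. lia.
  - exists 0%nat, n. split; [simpl; lia|auto].
Qed.

Lemma tower a m k : (a | yn m) -> rel_prime a 2 ->
  exists C, yn (2^k * m) = yn m * C /\ rel_prime a C.
Proof.
  intros Ha H2. induction k as [|k [C [HC Hr]]].
  - exists 1. split; [simpl; rewrite Nat.add_0_r; ring|]. apply rel_prime_sym, rel_prime_1.
  - set (t := (2^k*m)%nat) in *.
    replace (2^S k * m)%nat with (t + t)%nat by (unfold t; rewrite Nat.pow_succ_r'; lia).
    destruct (pell_add t t) as [_ E]. rewrite E, HC.
    exists (2 * xn t * C). split; [ring|].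
    apply rel_prime_mult; [apply rel_prime_mult|]; [exact H2| |exact Hr].
    apply Zis_gcd_intro; try (exists 1; ring) ; try (exists a; ring); try (exists (xn t); ring).
      intros d Hda Hdx.
      assert (Hdy : (d | yn t)) by (rewrite HC; apply Z.divide_mul_l; apply (Z.divide_trans _ a); auto).
      rewrite <- (pell_eq t). apply Z.divide_sub_r.
      + apply Z.divide_mul_l; auto.
      + apply Z.divide_mul_r; auto.
Qed.

Lemma odd_facts a b : 171*a*a - 169*b*b = 2 -> rel_prime a 2 /\ rel_prime b 2 /\ rel_prime a b.
Proof.
  intros H.
  destruct (Z.Even_or_Odd a) as [[q Hq]|[q Hq]];
  destruct (Z.Even_or_Odd b) as [[p Hp]|[p Hp]]; subst; try (exfalso; nia).
  split; [|split].
  - apply bezout_rel_prime. exists 1 (-q). ring.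
  - apply bezout_rel_prime. exists 1 (-p). ring.
  - apply Zis_gcd_intro; try (exists (2*q+1); ring); try (exists 1; ring); try (exists (2*p+1); ring).
    intros d H1 H2.
    assert (H3 : (d | 2)).
    { rewrite <- H. apply Z.divide_sub_r.
      - apply Z.divide_mul_r; auto.
      - apply Z.divide_mul_r; auto. }
    replace 1 with ((2*q+1) - q*2) by ring. apply Z.divide_sub_r; auto.
    apply Z.divide_mul_r; auto.
Qed.

Theorem corollary5 (n : nat) :
  (0 < n)%nat ->
  ~ is_pow2 n ->
  (39 | yn n) ->
  representable (yn n / 39) ->
  exists r s v u : Z,
    19 * 3 ^ 2 * (Qf r s) ^ 2 - 13 ^ 2 * (Qf v u) ^ 2 = 2 /\
    ~ ((r = 1 \/ r = -1) /\ s = 0) /\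
    (39 * Qf r s * Qf v u | yn n).
Proof.
  intros Hn Hp2 _ [_ [w [t Hwt]]].
  destruct (pow2_dec n Hn) as [k [m [En [j Hj]]]].
  destruct j as [|j'].
  { exfalso. apply Hp2. exists k. lia. }
  pose proof (eta_props j') as P0.
  pose proof (eta_props (S j')) as P1.
  cbn [eta] in P1. destruct (eta j') as [A0 B0].
  set (A := 170*A0 + 741*B0) in P1. set (B := 39*A0 + 170*B0) in P1.
  destruct P0 as [_ [_ [_ [_ [_ [HA0 HB0]]]]]].
  destruct P1 as [_ [H2 [H3 [[b Hb] [[a Ha] [H6 H7]]]]]].
  assert (HB3 : B > 3) by (unfold B; lia).
  clearbody A B. rewrite <- Hj in H2.
  assert (Hapos : 0 < a) by lia. assert (Hbpos : 0 < b) by lia.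
  assert (Heq : 171*a*a - 169*b*b = 2) by (subst A B; lia).
  destruct (odd_facts a b Heq) as [Ha2 [Hb2 Hab]].
  assert (Hym : yn m = a * b * 39) by (rewrite <- H2, Ha, Hb; ring).
  destruct (tower a m k) as [C [HC HrC]]; [exists (b*39); rewrite Hym; ring| exact Ha2|].
  destruct (tower b m k) as [C' [HC' HrC']]; [exists (a*39); rewrite Hym; ring| exact Hb2|].
  rewrite <- En in HC, HC'.
  destruct (pell_pos m) as [_ [_ Hm]]. specialize (Hm ltac:(lia)).
  destruct (pell_pos n) as [_ [_ Hnp]]. specialize (Hnp Hn).
  assert (C' = C) by nia. subst C'.
  assert (HCpos : 0 < C) by nia.
  assert (Hdiv : yn n / 39 = a * b * C) by (rewrite HC, Hym; replace (a*b*39*C) with ((a*b*C)*39) by ring; apply Z.div_mul; lia).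
  rewrite Hdiv in Hwt.
  destruct (rep_div (S (Z.to_nat a)) a (b*C) w t ltac:(lia) Hapos ltac:(nia)
     ltac:(apply rel_prime_mult; auto) ltac:(rewrite <- Hwt; ring)) as [r [s Hrs]].
  destruct (rep_div (S (Z.to_nat b)) b (a*C) w t ltac:(lia) Hbpos ltac:(nia)
     ltac:(apply rel_prime_mult; auto; apply rel_prime_sym; auto) ltac:(rewrite <- Hwt; ring)) as [v [u Hvu]].
  exists r, s, v, u. rewrite <- Hrs, <- Hvu. split; [|split].
  - rewrite !Z.pow_2_r. lia.
  - intros [[-> | ->] ->]; rewrite Qf_eq in Hrs; lia.
  - exists C. rewrite HC, Hym. ring.
Qed.
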